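(* Let $t\ge 3$ and let $L$ be an $\mathbb{F}_q$-linear set of pseudoregulus type of $\Lambda=PG(1,q^t)$. Then its transversal points are uniquely determined: if $L=L_{\rho,\tau}$ with respect to transversal points $P_1,P_2$ and also $L=L_{\rho',\tau'}$ with respect to transversal points $P_1',P_2'$, then $\{P_1',P_2'\}=\{P_1,P_2\}$.
   Context: Let $\Lambda=PG(V,\mathbb{F}_{q^t})=PG(1,q^t)$ with $V$ a 2-dimensional $\mathbb{F}_{q^t}$-space; $\langle\mathbf u\rangle_{q^t}$ denotes the point defined by $\mathbf u\neq\mathbf 0$. Definition: given two distinct points $P_1=\langle\mathbf w\rangle_{q^t}$, $P_2=\langle\mathbf v\rangle_{q^t}$ of $\Lambda$, an automorphism $\tau$ of $\mathbb{F}_{q^t}$ with $\mathrm{Fix}(\tau)=\mathbb{F}_q$, and $\rho\in\mathbb{F}_{q^t}^*$, the set $L_{\rho,\tau}=\{\langle\lambda\mathbf w+\rho\lambda^\tau\mathbf v\rangle_{q^t}:\lambda\in\mathbb{F}_{q^t}^*\}$ is called an $\mathbb{F}_q$-linear set of pseudoregulus type of $\Lambda$, with transversal points $P_1$ and $P_2$. *)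

(* Defs.v *)
From HB Require Import structures.
From mathcomp Require Import all_boot all_order all_algebra all_field.
Set Implicit Arguments. Unset Strict Implicit. Unset Printing Implicit Defensive.
Import GRing.Theory.
Local Open Scope ring_scope.

(* The underlying 2-dimensional F_{q^t}-space V is 'rV[K]_2, with K the finite
   field F_{q^t}.  A point <u>_{q^t} of PG(1,q^t) is represented by a nonzero
   vector u; two nonzero vectors define the same point iff proportional. *)
Definition same_point (K : fieldType) (u u' : 'rV[K]_2) : Prop :=
  exists c : K, c != 0 /\ u' = c *: u.

Definition in_pseudoregulus (K : fieldType) (w v : 'rV[K]_2) (rho : K)
  (tau : K -> K) (u : 'rV[K]_2) : Prop :=
  exists lambda : K, lambda != 0 /\
    same_point (lambda *: w + (rho * tau lambda) *: v) u.

(* Fix(tau) = F_q : tau is a field automorphism whose fixed field has q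
   elements (the unique subfield of order q of the finite field K). *)
Definition fix_is_Fq (K : finFieldType) (q : nat) (tau : {rmorphism K -> K}) : Prop :=
  bijective tau /\ #|[set x : K | tau x == x]| = q.

(* Data for L_{rho,tau} with transversal points <w>, <v>: w, v nonzero and
   defining distinct points; rho nonzero; tau as above. *)
Definition pseudoregulus_data (K : finFieldType) (q : nat) (w v : 'rV[K]_2)
  (rho : K) (tau : {rmorphism K -> K}) : Prop :=
  [/\ w != 0, v != 0, ~ same_point w v, rho != 0 & fix_is_Fq q tau].

(* Main.v *)
Require Import Defs.
From HB Require Import structures.
From mathcomp Require Import all_boot all_order all_algebra all_field.
From mathcomp Require Import fingroup pgroup abelian finalg.
From mathcomp Require Import ring zify.
Import GRing.Theory.
Local Open Scope ring_scope.

Set Implicit Arguments. Unset Strict Implicit.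

Lemma fix_pnat (K : finFieldType) (tau : {rmorphism K -> K}) :
  [pchar K].-nat #|[set x : K | tau x == x]|.
Proof.
have [p pr pc] := finPcharP K.
have gF : group_set [set x : K | tau x == x].
  apply/group_setP; split; first by rewrite inE FinRing.zmod1gE rmorph0.
  move=> x y; rewrite !inE !FinRing.zmodMgE => /eqP hx /eqP hy.
  by rewrite rmorphD hx hy.
have := pgroupS (subsetT (Group gF)) (abelem_pgroup (fin_ring_pchar_abelem pc)).
rewrite /pgroup /= => H.
by rewrite (eq_pnat _ (pcharf_eq pc)).
Qed.

Definition Nset (K : finFieldType) (tau : K -> K) : {set K} :=
  [set x | [exists l, (l != 0) && (x == tau l / l)]].

Section NS.
Variables (K : finFieldType) (tau : {rmorphism K -> K}).

Lemma NsetP x : reflect (exists2 l, l != 0 & x = tau l / l) (x \in Nset tau).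
Proof.
rewrite inE; apply: (iffP existsP) => [[l /andP[l0 /eqP ->]]|[l l0 ->]]; first by exists l.
by exists l; rewrite l0 eqxx.
Qed.

Lemma Nset_neq0 x : x \in Nset tau -> x != 0.
Proof.
case/NsetP=> l l0 ->; rewrite mulf_eq0 invr_eq0 negb_or l0 andbT.
by rewrite fmorph_eq0.
Qed.

Lemma NsetM x y : x \in Nset tau -> y \in Nset tau -> x * y \in Nset tau.
Proof.
case/NsetP=> l l0 ->; case/NsetP=> m m0 ->; apply/NsetP; exists (l * m).
  by rewrite mulf_neq0.
by rewrite rmorphM invfM; rewrite mulrACA.
Qed.

Lemma Nset_exp x : x \in Nset tau -> x ^+ #|Nset tau| = 1.
Proof.
move=> xN.
have inj : {in Nset tau &, injective (fun y => x * y)}.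
  by move=> y z _ _; apply: mulfI; apply: Nset_neq0.
have eqN : (fun y => x * y) @: Nset tau = Nset tau.
  apply/eqP; rewrite eqEcard card_in_imset // leqnn andbT.
  by apply/subsetP=> _ /imsetP[y yN ->]; apply: NsetM.
have P0 : \prod_(y in Nset tau) y != 0.
  by apply/prodf_neq0 => y; apply: Nset_neq0.
have : \prod_(j in (fun y => x * y) @: Nset tau) j = \prod_(i in Nset tau) (x * i).
  exact: big_imset.
rewrite eqN big_split /= prodr_const => /eqP.
by rewrite -{1}(mul1r (\prod_(y in _) y)) (inj_eq (mulIf P0)) eq_sym => /eqP.
Qed.

Lemma Nset_card (q : nat) : #|[set x : K | tau x == x]| = q ->
  (#|Nset tau| * q.-1 = #|K|.-1)%N.
Proof.
move=> hq.
set F := [set x : K | tau x == x].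
have F0 : 0 \in F by rewrite inE rmorph0.
have cF : #|F :\ 0| = q.-1 by rewrite -hq (cardsD1 0 F) F0.
have -> : #|K|.-1 = (\sum_(l : K | l != 0%R) 1)%N.
  by rewrite sum1_card cardC1.
rewrite (partition_big (fun l => tau l / l) (mem (Nset tau))); last first.
  by move=> l l0; apply/NsetP; exists l.
rewrite -sum_nat_const; apply: eq_bigr => y /NsetP[l0 l00 ->].
rewrite sum1_card -cF.
have E : [pred l | (l != 0) && (tau l / l == tau l0 / l0)] =i
          (fun x => l0 * x) @: (F :\ 0).
  move=> l; rewrite !inE; apply/andP/imsetP.
    case=> l1 /eqP e; exists (l / l0).
      rewrite !inE mulf_neq0 ?invr_eq0 //=.
      rewrite fmorph_div; apply/eqP.
      apply: (mulIf (_ : tau l0 != 0)); first by rewrite fmorph_eq0.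
      rewrite divfK ?fmorph_eq0 //.
      apply: (mulIf (_ : l^-1 != 0)); first by rewrite invr_eq0.
      rewrite e; field.
      by rewrite l1 l00.
    by rewrite mulrC divfK.
  case=> x; rewrite !inE => /andP[x0 /eqP tx] ->; split.
    by rewrite mulf_neq0.
  by rewrite rmorphM tx invfM; apply/eqP; field; rewrite x0 l00.
rewrite (eq_card E) card_imset //; apply: mulfI.
exact: l00.
Qed.
End NS.

Section Arith.
Local Open Scope nat_scope.
Lemma geo (q k : nat) : (0 < q)%N -> exists S, ((q.-1 * S).+1 = q ^ k.+1 /\ 0 < S)%N.
Proof.
move=> q0; elim: k => [|k [S [e S0]]].
  by exists 1%N; rewrite muln1 expn1; lia.
exists (q * S).+1; split; last by [].
rewrite expnS -e; case: q q0 {e} => // q' _ /=; nia.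
Qed.

Lemma arith (q t n : nat) : (2 <= q)%N -> (3 <= t)%N -> (n * q.-1 = (q ^ t).-1)%N ->
  exists s, (n = 1 + q * (1 + q * s.+1))%N.
Proof.
move=> q2 t3 e.
have [S [eS S0]] := @geo q (t - 3) (ltnW q2).
exists S.-1; rewrite prednK //.
have et : t = ((t - 3).+1 + 2)%N by lia.
rewrite et expnD -eS in e.
case: q q2 {eS et} e => // q' q2 /= e.
have q0 : (0 < q')%N by lia.
apply/eqP; rewrite -(eqn_pmul2r q0); apply/eqP.
rewrite e; nia.
Qed.

End Arith.

Definition lin (K : fieldType) (a b : K) : {poly K} := a%:P + b *: 'X.

Lemma size_lin (K : fieldType) (a b : K) : (size (lin a b) <= 2)%N.
Proof.
rewrite /lin; apply: (leq_trans (size_polyD _ _)); rewrite geq_max.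
apply/andP; split; first exact: (leq_trans (size_polyC_leq1 _)).
by apply: (leq_trans (size_scale_leq _ _)); rewrite size_polyX.
Qed.

Lemma size_lin_exp (K : fieldType) (a b : K) k : (size (lin a b ^+ k) <= k.+1)%N.
Proof.
have := size_exp (lin a b) k.
have := size_lin a b => h e.
apply: (leq_trans (leqSpred _)); rewrite e ltnS.
by apply: leq_trans (leq_mul (_ : (size (lin a b)).-1 <= 1)%N (leqnn k)) _; [lia|rewrite mul1n].
Qed.

Lemma size_subP (K : fieldType) (p r : {poly K}) N : (size p <= N)%N -> (size r <= N)%N -> (size (p - r)%R <= N)%N.
Proof.
move=> hp hr; apply: (leq_trans (size_polyD _ _)); rewrite geq_max hp /=.
by rewrite size_polyN.
Qed.

Lemma size_scaleP (K : fieldType) (p : {poly K}) k N : (size p <= N)%N -> (size (k *: p) <= N)%N.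
Proof. by move=> h; apply: leq_trans (size_scale_leq _ _) h. Qed.

Lemma horner_lin (K : fieldType) (a b x : K) : (lin a b).[x] = a + b * x.
Proof. by rewrite /lin !hornerE. Qed.

Lemma deriv_lin_exp (K : fieldType) (a b : K) k :
  (lin a b ^+ k)^`() = (b *: lin a b ^+ k.-1) *+ k.
Proof.
rewrite deriv_exp /lin derivD derivC derivZ derivX add0r alg_polyC.
by rewrite mul_polyC.
Qed.

Lemma final_alg (K : fieldType) (q m : nat) (a b c d : K) :
  (0 < q)%N -> (0 < m)%N ->
  (forall x : K, x ^+ q = 1 -> x = 1) ->
  b * a ^+ (q * m) = d * c ^+ (q * m) ->
  b ^+ q.+1 * a ^+ (q * m.-1) = d ^+ q.+1 * c ^+ (q * m.-1) ->
  a * d - b * c != 0 ->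
  (b = 0 /\ c = 0) \/ (a = 0 /\ d = 0).
Proof.
move=> q0 m0 frob E1 E2 det.
have qm0 : (0 < q * m)%N by rewrite muln_gt0 q0.
have [ea0|a0] := eqVneq a 0.
  rewrite ea0 in E1 det *; right; split => //; move: E1; rewrite expr0n eqn0Ngt qm0 mulr0 => /esym/eqP.
  rewrite mulf_eq0 expf_eq0 qm0 /= => /orP[/eqP //|/eqP c0].
  by move: det; rewrite c0 !mul0r mulr0 subrr eqxx.
have [ec0|c0] := eqVneq c 0.
  rewrite ec0 in E1 det *; left; split => //; move: E1; rewrite expr0n eqn0Ngt qm0 mulr0 => /eqP.
  rewrite mulf_eq0 expf_eq0 qm0 (negbTE a0) orbF => /eqP //.
exfalso.
have [u ea] : exists u, a = u * c by exists (a / c); rewrite divfK.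
have u0 : u != 0 by move: a0; rewrite ea mulf_eq0 negb_or => /andP[].
have ed : d = b * u ^+ (q * m).
  apply: (mulIf (_ : c ^+ (q * m) != 0)); first by rewrite expf_neq0.
  by rewrite -E1 ea exprMn mulrA.
have [b0|b0] := eqVneq b 0.
  by move: det; rewrite ed b0 !mul0r mulr0 subrr eqxx.
rewrite ea in E1.
rewrite ea ed !exprMn in E2.
have E3 : u ^+ (q * m.-1) = u ^+ (q * m) ^+ q.+1.
  have hc : b ^+ q.+1 * c ^+ (q * m.-1) != 0 by rewrite mulf_neq0 ?expf_neq0.
  apply: (mulIf hc).
  transitivity (b ^+ q.+1 * (u ^+ (q * m.-1) * c ^+ (q * m.-1))); first by ring.
  by rewrite E2; ring.
have E4 : (u ^+ (1 + q * m)) ^+ q = 1.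
  apply: (mulIf (_ : u ^+ (q * m.-1) != 0)); first by rewrite expf_neq0.
  rewrite mul1r [in RHS]E3 -!exprM -exprD; congr (_ ^+ _).
  clear -m0; case: m m0 => // m' _ /=; nia.
have E5 := frob _ E4.
move: det; rewrite ea ed.
have -> : u * c * (b * u ^+ (q * m)) - b * c = b * c * (u ^+ (1 + q * m) - 1).
  by rewrite exprD expr1; ring.
by rewrite E5 subrr mulr0 eqxx.
Qed.

Lemma poly_key (K : finFieldType) (q n m : nat) (a b c d : K) (S : {set K}) :
  [pchar K].-nat q -> (1 < q)%N -> n = (1 + q * m)%N -> (2 <= m)%N -> m%:R = 1 :> K ->
  #|S| = n -> 0 \notin S -> (forall z, z \in S -> z ^+ n = 1) ->
  (forall z, z \in S -> (a + b * z) ^+ n = (c + d * z) ^+ n) ->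
  a * d - b * c != 0 -> (b = 0 /\ c = 0) \/ (a = 0 /\ d = 0).
Proof.
move=> pq q1 en m2 mR cS S0 Sroot Seq det.
have frobD (x y : K) : (x + y) ^+ q = x ^+ q + y ^+ q by exact: (exprDn_pchar x y pq).
have frobI : injective (fun x : K => x ^+ q).
  move=> x y /= e; apply/eqP; rewrite -subr_eq0.
  have := frobD (x - y) y; rewrite subrK e => /eqP.
  rewrite -[X in X == _]add0r (inj_eq (addIr (y ^+ q))) eq_sym.
  by rewrite expf_eq0 => /andP[].
have frobS (y : K) : exists x, y = x ^+ q.
  have := injF_onto frobI y; case/codomP => x ->; by exists x.
have qmgt0 : (0 < q * m)%N by rewrite muln_gt0; apply/andP; split; lia.
have n1 : n.-1 = (q * m)%N by rewrite en.
have ngt0 : (0 < n)%N by rewrite en.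
have nR : n%:R != 0 :> K.
  have qR : q%:R = 0 :> K.
    have pp : pdiv q \in [pchar K] by apply: (pnatPpi pq); rewrite pi_pdiv.
    by rewrite -(divnK (pdiv_dvd q)) natrM (pcharf0 pp) mulr0.
  by rewrite en natrD natrM qR mul0r addr0 oner_neq0.
have [k ek] : exists k, k = c ^+ n - a ^+ n by exists (c ^+ n - a ^+ n).
pose h := lin a b ^+ n - lin c d ^+ n - k *: ('X^n - 1).
have h0 : h = 0.
  apply: (@roots_geq_poly_eq0 _ _ (0 :: enum S)).
  - rewrite /= !rootE; apply/andP; split.
      rewrite /h !(hornerE, horner_lin) expr0n eqn0Ngt ngt0 /= ek.
      move: (a ^+ n) (c ^+ n) => A C; apply/eqP; ring.
    apply/allP => z; rewrite mem_enum => zS; rewrite rootE /h !(hornerE, horner_lin).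
    by rewrite (Seq z zS) (Sroot z zS) !subrr mulr0 subrr.
  - by rewrite /= mem_enum S0 enum_uniq.
  - rewrite /= -cardE cS; apply: size_subP; first apply: size_subP.
    + exact: size_lin_exp.
    + exact: size_lin_exp.
    apply: size_scaleP; apply: size_subP; first by rewrite size_polyXn.
    by rewrite size_polyC; case: (_ != _).
pose G x := b * (a + b * x) ^+ n.-1 - d * (c + d * x) ^+ n.-1 - k * x ^+ n.-1.
have G0 x : G x = 0.
  have : (h^`()).[x] = n%:R * G x.
    rewrite /h !derivB !deriv_lin_exp derivZ derivB derivC subr0 derivXn.
    rewrite !(hornerMn, hornerE, horner_lin) /G mulr_natl !mulrnBl mulrnAr.
    by [].
  by rewrite h0 deriv0 horner0 => /esym/eqP; rewrite mulf_eq0 (negbTE nR) /= => /eqP.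
have E1 : b * a ^+ (q * m) = d * c ^+ (q * m).
  have := G0 0; rewrite /G n1 !mulr0 !addr0 expr0n eqn0Ngt qmgt0 /= mulr0 subr0.
  by move/eqP; rewrite subr_eq0 => /eqP.
pose R := b *: lin (a ^+ q) (b ^+ q) ^+ m - d *: lin (c ^+ q) (d ^+ q) ^+ m - k *: 'X^m.
have R0 : R = 0.
  apply: (@roots_geq_poly_eq0 _ _ (enum K)).
  - apply/allP => y _; have [x ->] := frobS y; rewrite rootE /R !(hornerE, horner_lin).
    have := G0 x; rewrite /G n1 !exprM -!exprMn !frobD !exprMn => <-; by [].
  - exact: enum_uniq.
  - rewrite -cardE; apply: (@leq_trans m.+1).
      apply: size_subP; first apply: size_subP.
      + exact/size_scaleP/size_lin_exp.
      + exact/size_scaleP/size_lin_exp.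
      by apply: size_scaleP; rewrite size_polyXn.
    apply: (@leq_trans n); first by rewrite en; nia.
    by rewrite -cS max_card.
have E2 : b ^+ q.+1 * a ^+ (q * m.-1) = d ^+ q.+1 * c ^+ (q * m.-1).
  have : (R^`()).[0] = m%:R * (b * b ^+ q * (a ^+ q) ^+ m.-1 - d * d ^+ q * (c ^+ q) ^+ m.-1 - k * 0 ^+ m.-1).
    rewrite /R !derivB !derivZ !deriv_lin_exp derivXn.
    by rewrite !(hornerMn, hornerE, horner_lin) mulr_natl !mulrnBl !mulrnAr !mulrA.
  rewrite R0 deriv0 horner0 mR mul1r expr0n eqn0Ngt.
  have -> : (0 < m.-1)%N by lia.
  rewrite /= mulr0 subr0 => /esym/eqP; rewrite subr_eq0 => /eqP.
  by rewrite -!exprM !exprS.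
apply: final_alg E1 E2 det; try lia.
by move=> x e; apply: frobI; rewrite /= e expr1n.
Qed.

Definition det2 (K : fieldType) (u u' : 'rV[K]_2) : K :=
  u 0 0 * u' 0 1 - u 0 1 * u' 0 0.

Lemma rowE2 (K : fieldType) (u u' : 'rV[K]_2) :
  u 0 0 = u' 0 0 -> u 0 1 = u' 0 1 -> u = u'.
Proof.
move=> h0 h1; apply/rowP => j.
have [->|->] : j = 0 \/ j = 1.
  case: j => [[|[|j]] hj]; [left|right|by []]; exact: val_inj.
by [].
by [].
Qed.

Lemma row_neq0 (K : fieldType) (u : 'rV[K]_2) : u != 0 -> u 0 0 != 0 \/ u 0 1 != 0.
Proof.
move=> u0; case: (eqVneq (u 0 0) 0) => [e0|]; last by left.
case: (eqVneq (u 0 1) 0) => [e1|]; last by right.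
by move: u0; rewrite (@rowE2 _ u 0) ?eqxx // mxE.
Qed.

Lemma det2_same (K : fieldType) (u u' : 'rV[K]_2) :
  u != 0 -> u' != 0 -> det2 u u' = 0 -> same_point u u'.
Proof.
rewrite /det2 => un0 u'n0 /eqP; rewrite subr_eq0 => /eqP e.
case: (row_neq0 un0) => h.
- exists (u' 0 0 / u 0 0); split.
    rewrite mulf_neq0 ?invr_eq0 //; apply/eqP => e0.
    move: e; rewrite e0 mulr0 => /eqP; rewrite mulf_eq0 (negbTE h) /= => /eqP e1.
    by move: u'n0; rewrite (@rowE2 _ u' 0) ?eqxx // mxE.
  apply: rowE2; rewrite !mxE; first by rewrite divfK.
  by apply: (mulfI h); rewrite e; field.
- exists (u' 0 1 / u 0 1); split.
    rewrite mulf_neq0 ?invr_eq0 //; apply/eqP => e0.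
    move: e; rewrite e0 mulr0 => /eqP; rewrite eq_sym mulf_eq0 (negbTE h) /= => /eqP e1.
    by move: u'n0; rewrite (@rowE2 _ u' 0) ?eqxx // mxE.
  apply: rowE2; rewrite !mxE; last by rewrite divfK.
  by apply: (mulfI h); rewrite -e; field.
Qed.

Lemma same_det2 (K : fieldType) (u u' : 'rV[K]_2) : same_point u u' -> det2 u u' = 0.
Proof. by case=> c [_ ->]; rewrite /det2 !mxE; ring. Qed.

Unset Implicit Arguments. Set Strict Implicit.

Theorem proposition4p3 (K : finFieldType) (q t : nat)
  (hq : #|K| = (q ^ t)%N) (ht : (3 <= t)%N)
  (w v : 'rV[K]_2) (rho : K) (tau : {rmorphism K -> K})
  (w' v' : 'rV[K]_2) (rho' : K) (tau' : {rmorphism K -> K})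
  (hL : pseudoregulus_data q w v rho tau)
  (hL' : pseudoregulus_data q w' v' rho' tau')
  (heq : forall u : 'rV[K]_2, u != 0 ->
           (in_pseudoregulus w v rho tau u <-> in_pseudoregulus w' v' rho' tau' u)) :
  (same_point w w' /\ same_point v v') \/ (same_point w v' /\ same_point v w').
Proof.
case: hL => w0 v0 nwv rho0 [_ hF].
case: hL' => w'0 v'0 nwv' rho'0 [_ hF'].
have cN := Nset_card hF.
have cN' := Nset_card hF'.
rewrite hq in cN cN'.
have q2 : (1 < q)%N.
  rewrite -hF; apply: (@leq_trans #|[set (0:K); 1]|).
    by rewrite cards2 eq_sym oner_neq0.
  apply: subset_leq_card; apply/subsetP => x; rewrite !inE => /orP[/eqP->|/eqP->].
    by rewrite rmorph0.
  by rewrite rmorph1.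
have nn' : #|Nset tau'| = #|Nset tau|.
  apply/eqP; rewrite -(eqn_pmul2r (_ : 0 < q.-1)%N); last by lia.
  by rewrite cN cN'.
have [s en] := arith q2 ht cN.
have pq : [pchar K].-nat q by rewrite -hF; exact: fix_pnat.
have qR : q%:R = 0 :> K.
  have pp : pdiv q \in [pchar K] by apply: (pnatPpi pq); rewrite pi_pdiv.
  by rewrite -(divnK (pdiv_dvd q)) natrM (pcharf0 pp) mulr0.
have mR : (1 + q * s.+1)%N%:R = 1 :> K.
  by rewrite natrD natrM qR mul0r addr0.
have Dwv : det2 w v != 0 by apply/eqP => /(det2_same w0 v0).
have Dwv' : det2 w' v' != 0 by apply/eqP => /(det2_same w'0 v'0).
pose A := det2 w w'; pose B := det2 w v'; pose C := det2 w' v; pose Dd := det2 v' v.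
have key := @poly_key K q #|Nset tau| (1 + q * s.+1)%N A (B * rho') (rho * C)
  (rho * Dd * rho') (Nset tau') pq q2 en.
have m2 : (2 <= 1 + q * s.+1)%N by nia.
have S0 : 0 \notin Nset tau' by apply/negP => /Nset_neq0; rewrite eqxx.
have Sroot z : z \in Nset tau' -> z ^+ #|Nset tau| = 1.
  by rewrite -nn'; exact: Nset_exp.
have detne : A * (rho * Dd * rho') - B * rho' * (rho * C) != 0.
  have -> : A * (rho * Dd * rho') - B * rho' * (rho * C) =
            - (rho * rho' * (det2 w v * det2 w' v')).
    by rewrite /A /B /C /Dd /det2; ring.
  by rewrite oppr_eq0 !mulf_neq0.
have Seq z : z \in Nset tau' ->
    (A + B * rho' * z) ^+ #|Nset tau| = (rho * C + rho * Dd * rho' * z) ^+ #|Nset tau|.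
  move=> zS; case/NsetP: (zS) => mu mu0 ez.
  pose u := w' + (rho' * z) *: v'.
  have un0 : u != 0.
    apply/eqP => u0.
    have ew : w' = - ((rho' * z) *: v').
      by apply/eqP; rewrite -addr_eq0; apply/eqP.
    by move: Dwv'; rewrite ew /det2 !mxE (_ : _ - _ = 0) ?eqxx //; ring.
  have uL' : in_pseudoregulus w' v' rho' tau' u.
    exists mu; split => //; exists mu^-1; split; first by rewrite invr_eq0.
    rewrite /u ez; apply: rowE2; rewrite !mxE; field; exact: mu0.
  have [lam [lam0 [k [k0 eu]]]] := (heq u un0).2 uL'.
  have e1 : A + B * rho' * z = tau lam * (rho * k * det2 w v).
    transitivity (det2 w u); first by rewrite /u /A /B /det2 !mxE; ring.
    by rewrite eu /det2 !mxE; ring.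
  have e2 : rho * C + rho * Dd * rho' * z = lam * (rho * k * det2 w v).
    transitivity (rho * det2 u v); first by rewrite /u /C /Dd /det2 !mxE; ring.
    by rewrite eu /det2 !mxE; ring.
  have xN : tau lam / lam \in Nset tau by apply/NsetP; exists lam.
  rewrite e1 e2 !exprMn -[tau lam](divfK lam0) exprMn (Nset_exp xN) mul1r.
  by [].
have := key m2 mR nn' S0 Sroot Seq detne.
case=> [[b0 c0]|[a0 d0]].
- right; split.
    apply: det2_same => //.
    by move/eqP: b0; rewrite mulf_eq0 (negbTE rho'0) orbF => /eqP.
  apply: det2_same => //.
  have -> : det2 v w' = - C by rewrite /C /det2; ring.
  by move/eqP: c0; rewrite mulf_eq0 (negbTE rho0) /= => /eqP ->; rewrite oppr0.
- left; split; first by apply: det2_same.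
  apply: det2_same => //.
  have -> : det2 v v' = - Dd by rewrite /Dd /det2; ring.
  move/eqP: d0; rewrite !mulf_eq0 (negbTE rho0) (negbTE rho'0) /= orbF.
  by move/eqP ->; rewrite oppr0.
Qed.
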